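(* There is an absolute constant $c>0$ such that for all integers $n\ge 1$ and $1\le d<n$, the function $\mathrm{HAM}^{(d)}_n$ has a realization with margin at least $c/d$; that is, $\gamma(\mathrm{HAM}^{(d)}_n)=\Omega(1/d)$.
   Context: $\mathrm{HAM}^{(d)}_n:\{0,1\}^n\times\{0,1\}^n\to\{0,1\}$ is defined by $\mathrm{HAM}^{(d)}_n(x,y)=1$ iff the Hamming distance between $x$ and $y$ is at most $d$. An assignment of real unit vectors $\alpha_x,\beta_y$ is a realization of a Boolean function $f$ with margin $\gamma>0$ if $\langle\alpha_x,\beta_y\rangle\ge\gamma$ whenever $f(x,y)=0$ and $\langle\alpha_x,\beta_y\rangle\le-\gamma$ whenever $f(x,y)=1$; $\gamma(f)$ denotes the supremum of margins over all realizations of $f$ in any dimension. *)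

(* Defs.v *)
From mathcomp Require Import all_boot all_order all_algebra.
From Stdlib Require Rdefinitions.
From mathcomp Require Import Rstruct.
Notation R := Rdefinitions.R.
Set Implicit Arguments. Unset Strict Implicit. Unset Printing Implicit Defensive.
Import Order.TTheory GRing.Theory Num.Theory.
Local Open Scope ring_scope.

Definition bitstr (n : nat) := {ffun 'I_n -> bool}.

Definition hamming (n : nat) (x y : bitstr n) : nat := #|[set i | x i != y i]|.

Definition HAM (n d : nat) (x y : bitstr n) : bool := (hamming x y <= d)%N.

Definition dotp (k : nat) (u v : 'rV[R]_k) : R := (u *m v^T) 0 0.

Definition realization_with_margin (A B : Type) (f : A -> B -> bool) (k : nat)
    (alpha : A -> 'rV[R]_k) (beta : B -> 'rV[R]_k) (gamma : R) : Prop :=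
  0 < gamma /\
  (forall x, dotp (alpha x) (alpha x) = 1) /\
  (forall y, dotp (beta y) (beta y) = 1) /\
  (forall x y, f x y = false -> gamma <= dotp (alpha x) (beta y)) /\
  (forall x y, f x y = true -> dotp (alpha x) (beta y) <= - gamma).

(* Main.v *)
Require Import Defs.
From mathcomp Require Import all_boot all_order all_algebra.
From Stdlib Require Rdefinitions.
From mathcomp Require Import Rstruct.
From mathcomp Require Import ring lra zify.
Import Order.TTheory GRing.Theory Num.Theory.
Local Open Scope ring_scope.
Set Implicit Arguments. Unset Strict Implicit.

Definition vec (I : finType) (f : I -> R) : 'rV[R]_#|I| :=
  \row_(j < #|I|) f (enum_val j).

Lemma dot_vec (I : finType) (f g : I -> R) :
  dotp (vec f) (vec g) = \sum_i f i * g i.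
Proof.
rewrite /dotp /vec !mxE (big_enum_val (fun i => f i * g i)).
by apply: eq_bigr => j _; rewrite !mxE.
Qed.

Section Feat.
Variables (n k : nat).
Definition TT := {ffun 'I_k -> 'I_n}.
Definition BB := {ffun 'I_k -> bool}.
Definition IX := (unit + (TT * BB))%type.
Definition comp (x : bitstr n) (t : TT) : BB := [ffun i => x (t i)].

Definition agree (x y : bitstr n) : nat := #|[set i | x i == y i]|.

Lemma agree_ham x y : (agree x y + hamming x y)%N = n.
Proof.
rewrite /agree /hamming.
have -> : #|[set i | x i != y i]| = #|[predC [set i | x i == y i]]|.
  by apply: eq_card => i; rewrite !inE.
by rewrite cardC card_ord.
Qed.

Lemma card_agree_t x y : #|[set t : TT | comp x t == comp y t]| = (agree x y ^ k)%N.
Proof.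
rewrite /agree -[k in (_ ^ k)%N]card_ord -card_ffun_on.
apply: eq_card => t; rewrite inE.
apply/eqP/ffun_onP => [H i | H].
  have := congr1 (fun f : BB => f i) H; rewrite /comp !ffunE inE => ->; by [].
by apply/ffunP => i; rewrite /comp !ffunE; have := H i; rewrite inE => /eqP.
Qed.

Lemma sum_ind (x y : bitstr n) :
  \sum_(p : TT * BB) ((comp x p.1 == p.2)%:R * (comp y p.1 == p.2)%:R : R)
  = (agree x y ^ k)%N%:R.
Proof.
rewrite -card_agree_t -(pair_bigA _ (fun (t:TT) (b:BB) => ((comp x t == b)%:R * (comp y t == b)%:R : R))) /=.
transitivity (\sum_(t : TT) ((comp x t == comp y t)%:R : R)).
  apply: eq_bigr => t _.
  rewrite (bigD1 (comp x t)) //= eqxx mul1r big1 ?addr0; last first.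
    by move=> b /negbTE; rewrite eq_sym => ->; rewrite mul0r.
  by rewrite eq_sym.
rewrite -sum1_card natr_sum [RHS]big_mkcond /=.
apply: eq_bigr => t _; rewrite inE; by case: (_ == _).
Qed.

Lemma agree_self x : agree x x = n.
Proof.
rewrite /agree -[RHS]card_ord; apply: eq_card => i; by rewrite inE eqxx.
Qed.

Variables (c0 s : R).
Definition Fx (x : bitstr n) (i : IX) : R :=
  match i with inl _ => c0 | inr p => s * (comp x p.1 == p.2)%:R end.
Definition Gy (y : bitstr n) (i : IX) : R :=
  match i with inl _ => c0 | inr p => - s * (comp y p.1 == p.2)%:R end.

Lemma sum_unit (F : unit -> R) : \sum_(i : unit) F i = F tt.
Proof. rewrite (bigD1 tt) // big1 /=; [exact: addr0 | by case]. Qed.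

Lemma dotFG x y : dotp (vec (Fx x)) (vec (Gy y)) = c0 ^+ 2 - s ^+ 2 * (agree x y ^ k)%N%:R.
Proof.
rewrite dot_vec big_sumType sum_unit /= -sum_ind mulr_sumr -sumrN.
congr (_ + _).
by apply: eq_bigr => p _; rewrite /=; ring.
Qed.

Lemma dotFF x : dotp (vec (Fx x)) (vec (Fx x)) = c0 ^+ 2 + s ^+ 2 * (n ^ k)%N%:R.
Proof.
have -> : (n ^ k)%N = (agree x x ^ k)%N by rewrite agree_self.
rewrite dot_vec big_sumType sum_unit /= -sum_ind mulr_sumr.
congr (_ + _).
by apply: eq_bigr => p _; rewrite /=; ring.
Qed.

Lemma dotGG y : dotp (vec (Gy y)) (vec (Gy y)) = c0 ^+ 2 + s ^+ 2 * (n ^ k)%N%:R.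
Proof.
have -> : (n ^ k)%N = (agree y y ^ k)%N by rewrite agree_self.
rewrite dot_vec big_sumType sum_unit /= -sum_ind mulr_sumr.
congr (_ + _).
by apply: eq_bigr => p _; rewrite /=; ring.
Qed.
End Feat.

Lemma pow_gap (a b : R) j : 0 <= b -> b <= a ->
  (j.+1)%:R * (a - b) * b ^+ j <= a ^+ j.+1 - b ^+ j.+1.
Proof.
move=> b0 ba; elim: j => [|j IH]; first by rewrite expr0 !expr1 mul1r mulr1.
set X := a ^+ j.+1 - b ^+ j.+1 in IH.
have bj : 0 <= b ^+ j by apply: exprn_ge0.
have hX : 0 <= X.
  apply: le_trans IH; by rewrite mulr_ge0 // mulr_ge0 // subr_ge0.
have -> : a ^+ j.+2 - b ^+ j.+2 = a * X + (a - b) * b ^+ j.+1.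
  by rewrite /X !exprS; ring.
rewrite !exprS -(addn1 j.+1) natrD.
have h1 : b * ((j.+1)%:R * (a - b) * b ^+ j) <= b * X by apply: ler_wpM2l.
have h2 : b * X <= a * X by apply: ler_wpM2r.
nra.
Qed.

Lemma bern (b : R) j : 0 <= b -> b <= 1 -> 1 - j%:R * (1 - b) <= b ^+ j.
Proof.
move=> b0 b1; elim: j => [|j IH]; first by rewrite expr0 mul0r subr0.
rewrite exprS -addn1 natrD.
have h1 : b * (1 - j%:R * (1 - b)) <= b * b ^+ j by apply: ler_wpM2l.
have hj : 0 <= j%:R :> R by apply: ler0n.
have h2 : 0 <= j%:R * ((1 - b) * (1 - b)) :> R by apply: mulr_ge0 => //; nra.
nra.
Qed.

Lemma gap (n d : nat) : (1 <= d)%N -> (d < n)%N ->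
  1 <= 8 * d%:R * (((n - d)%:R / n%:R) ^+ (n %/ (2 * d.+1)).+1
                  - ((n - d.+1)%:R / n%:R) ^+ (n %/ (2 * d.+1)).+1) :> R.
Proof.
move=> d1 dn.
set j := (n %/ (2 * d.+1))%N.
have h1 : ((j * (2 * d.+1))%N)%:R <= n%:R :> R by rewrite ler_nat leq_divM.
have h2 : n%:R <= ((j.+1 * (2 * d.+1))%N)%:R :> R.
  by rewrite ler_nat ltnW // ltn_ceil.
have eD : (d.+1)%:R = d%:R + 1 :> R by rewrite -addn1 natrD.
have eJ : (j.+1)%:R = j%:R + 1 :> R by rewrite -addn1 natrD.
rewrite !natrM eD eJ in h1 h2.
rewrite !natrB ?(ltnW dn) // eD.
set N := n%:R : R. set D := d%:R : R. set J := j%:R : R.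
have D1 : 1 <= D by rewrite /D ler1n.
have hDN : D + 1 <= N by rewrite /D /N -eD ler_nat.
have N0 : 0 < N by lra.
set r := N^-1.
have Nr : N * r = 1 by rewrite /r mulfV //; lra.
have r0 : 0 < r by rewrite /r invr_gt0.
have J0 : 0 <= J by apply: ler0n.
have -> : (N - D) / N = (N - (D + 1)) * r + r by rewrite /r; field; lra.
have -> : (N - (D + 1)) / N = (N - (D + 1)) * r by [].
set b := (N - (D + 1)) * r.
have hb : b = 1 - (D + 1) * r by rewrite /b mulrBl Nr.
have b0 : 0 <= b by rewrite /b mulr_ge0 // ?subr_ge0 // ltW.
have b1 : b <= 1 by rewrite hb; nra.
have G := @pow_gap (b + r) b j b0 (ltW (ltr_pwDr r0 (lexx b))).
have B := @bern b j b0 b1.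
rewrite eJ (_ : b + r - b = r) in G; last by ring.
rewrite -/J in B G h1 h2.
set g := (b + r) ^+ j.+1 - b ^+ j.+1 in G *.
set bj := b ^+ j in G B.
set q := (J + 1) * r.
have q0 : 0 <= q by rewrite /q mulr_ge0 //; lra.
have s1 : J * (2 * (D + 1)) * r <= 1.
  by have := ler_wpM2r (ltW r0) h1; rewrite Nr.
have s2 : 1 / 2 <= bj.
  have : 1 - b = (D + 1) * r by rewrite hb; ring.
  move=> e; rewrite e in B; nra.
have s3 : 1 <= 2 * (D + 1) * q.
  have : N * r <= (J + 1) * (2 * (D + 1)) * r by apply: ler_wpM2r => //; exact: ltW.
  rewrite Nr /q => h; nra.
have s4 : q / 2 <= g.
  have : q * (1 / 2) <= q * bj by apply: ler_wpM2l.
  move=> h; rewrite /q in h *; nra.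
nra.
Qed.


Lemma marg_lo (A B P D : R) : 0 <= B -> A <= 1 -> 1 <= D -> 1 <= 8 * D * (A - B) ->
  P <= B -> 1 / 32 / D <= ((A + B) / 2 - P) / (1 + (A + B) / 2).
Proof.
move=> B0 A1 D1 g PB.
have hBA : B <= A.
  have : 0 <= 8 * D by lra.
  move=> h; nra.
have t0 : 0 < 1 + (A + B) / 2 by lra.
rewrite ler_pdivlMr //.
have De : D * D^-1 = 1 by rewrite mulfV //; lra.
have e0 : 0 < D^-1 by rewrite invr_gt0; lra.
have -> : 1 / 32 / D = D^-1 / 32 by rewrite /=; field; lra.
have : 1 * D^-1 <= 8 * D * (A - B) * D^-1 by apply: ler_wpM2r => //; exact: ltW.
move=> h; nra.
Qed.

Lemma marg_hi (A B P D : R) : 0 <= B -> A <= 1 -> 1 <= D -> 1 <= 8 * D * (A - B) ->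
  A <= P -> ((A + B) / 2 - P) / (1 + (A + B) / 2) <= - (1 / 32 / D).
Proof.
move=> B0 A1 D1 g PB.
have hBA : B <= A.
  have : 0 <= 8 * D by lra.
  move=> h; nra.
have t0 : 0 < 1 + (A + B) / 2 by lra.
rewrite ler_pdivrMr //.
have De : D * D^-1 = 1 by rewrite mulfV //; lra.
have e0 : 0 < D^-1 by rewrite invr_gt0; lra.
have -> : 1 / 32 / D = D^-1 / 32 by rewrite /=; field; lra.
have : 1 * D^-1 <= 8 * D * (A - B) * D^-1 by apply: ler_wpM2r => //; exact: ltW.
move=> h; nra.
Qed.

Lemma dot_form (t N ag : R) k : 0 < 1 + t -> 0 < N ->
  t / (1 + t) - 1 / ((1 + t) * N ^+ k) * ag ^+ k = (t - (ag / N) ^+ k) / (1 + t).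
Proof.
move=> t0 N0; rewrite expr_div_n.
have : N ^+ k != 0 by rewrite expf_neq0 // gt_eqF.
move=> hN; field; rewrite hN /=; apply/andP; split => //; rewrite gt_eqF //.
Qed.

Lemma norm_form (t N : R) k : 0 < 1 + t -> 0 < N ->
  t / (1 + t) + 1 / ((1 + t) * N ^+ k) * N ^+ k = 1.
Proof.
move=> t0 N0.
have : N ^+ k != 0 by rewrite expf_neq0 // gt_eqF.
move=> hN; field; by rewrite hN gt_eqF.
Qed.

Theorem mainTheorem7 :
  exists c : R, 0 < c /\
    forall n d : nat, (1 <= n)%N -> (1 <= d)%N -> (d < n)%N ->
      exists (k : nat) (alpha beta : bitstr n -> 'rV[R]_k),
        realization_with_margin (@HAM n d) alpha beta (c / d%:R).
Proof.
exists (1 / 32); split; first lra.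
move=> n d n1 d1 dn.
have gp := gap d1 dn.
set k := (n %/ (2 * d.+1)).+1 in gp.
set A := ((n - d)%:R / n%:R) ^+ k in gp.
set B := ((n - d.+1)%:R / n%:R) ^+ k in gp.
have N0 : 0 < n%:R :> R by rewrite ltr0n.
have D1 : 1 <= d%:R :> R by rewrite ler1n.
have B0 : 0 <= B by rewrite /B exprn_ge0 // divr_ge0.
have A1 : A <= 1.
  rewrite /A exprn_ile1 ?divr_ge0 // ler_pdivrMr // mul1r ler_nat; lia.
have hBA : B <= A.
  have : 0 <= 8 * d%:R :> R by lra.
  move=> h; nra.
set t := (A + B) / 2.
have tp : 0 <= t by rewrite /t; lra.
have t0 : 0 < 1 + t by lra.
set c0 := Num.sqrt (t / (1 + t)).
set s := Num.sqrt (1 / ((1 + t) * n%:R ^+ k)).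
have c02 : c0 ^+ 2 = t / (1 + t).
  by rewrite sqr_sqrtr // divr_ge0 // ltW.
have s2 : s ^+ 2 = 1 / ((1 + t) * n%:R ^+ k).
  by rewrite sqr_sqrtr // divr_ge0 // mulr_ge0 ?exprn_ge0 // ltW.
eexists; exists (fun x => vec (@Fx n k c0 s x)), (fun y => vec (@Gy n k c0 s y)).
split; first by rewrite divr_gt0 //; lra.
split; first by move=> x; rewrite dotFF c02 s2 natrX norm_form.
split; first by move=> y; rewrite dotGG c02 s2 natrX norm_form.
have hag := fun x y => agree_ham x y.
split => x y; rewrite /HAM dotFG c02 s2 natrX dot_form // => H.
- apply: marg_lo => //.
  rewrite /B; apply: lerXn2r; rewrite ?inE ?nnegrE ?divr_ge0 //.
  apply: ler_wpM2r; first by rewrite invr_ge0 ltW.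
  rewrite ler_nat; have := agree_ham x y; move/negbT: H; rewrite -ltnNge; lia.
- apply: marg_hi => //.
  rewrite /A; apply: lerXn2r; rewrite ?inE ?nnegrE ?divr_ge0 //.
  apply: ler_wpM2r; first by rewrite invr_ge0 ltW.
  rewrite ler_nat; have := agree_ham x y; move: H; lia.
Qed.
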